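(* Let $V$ be a Hermitian positive definite $m\times m$ matrix such that $\hat L^\dagger(\mathbf{k})V\hat L(\mathbf{k})$ is nonsingular for every nonzero $\mathbf{k}\in\mathbb{R}^d$, set $\Gamma(\mathbf{k})=\hat L(\mathbf{k})\big(\hat L^\dagger(\mathbf{k})V\hat L(\mathbf{k})\big)^{-1}\hat L^\dagger(\mathbf{k})$ and $\Delta(\mathbf{k})=V-V\Gamma(\mathbf{k})V$. Let $\mathbf{w}\in\mathbb{C}^m$ and suppose $\beta=\sup_{\mathbf{k}\in\mathbb{R}^d,\mathbf{k}\neq0}\mathbf{w}\cdot\Delta(\mathbf{k})\mathbf{w}$ is finite and positive. Let $T=V^{-1}-\mathbf{w}\mathbf{w}^\dagger/\beta$ and $g(\mathbf{J})=\mathbf{J}\cdot T\mathbf{J}$. Let $\mathbf{k}\neq0$ satisfy $\mathbf{w}\cdot\Delta(\mathbf{k})\mathbf{w}=\beta$. Then the set of $\mathbf{H}\in\mathcal{J}_{\mathbf{k}}$ with $g(\mathbf{H})=0$ consists exactly of the vectors $\mathbf{H}=b\Delta(\mathbf{k})\mathbf{w}$ with $b\in\mathbb{C}$, and for such $\mathbf{H}$ one has $T\mathbf{H}=-b\Gamma(\mathbf{k})V\mathbf{w}=\hat L(\mathbf{k})\mathbf{G}$ with $\mathbf{G}=-b\big(\hat L^\dagger(\mathbf{k})V\hat L(\mathbf{k})\big)^{-1}\hat L^\dagger(\mathbf{k})V\mathbf{w}$.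
   Context: Fix integers $d,\ell,m,t\ge 1$ and complex constants $A_{rq}$, $A^{a_1\ldots a_h}_{rqh}$ ($1\le r\le m$, $1\le q\le \ell$, $1\le h\le t$, $1\le a_i\le d$). For $\mathbf{k}\in\mathbb{R}^d$, $\hat L(\mathbf{k})$ is the $m\times\ell$ matrix with entries $A_{rq}+\sum_{h=1}^t\sum_{a_1,\ldots,a_h=1}^d i^hA^{a_1\ldots a_h}_{rqh}k_{a_1}\cdots k_{a_h}$, $\hat L^\dagger(\mathbf{k})$ is its conjugate transpose, and $\mathcal{J}_{\mathbf{k}}\subset\mathbb{C}^m$ is the null space of $\hat L^\dagger(\mathbf{k})$; $\mathbf{w}^\dagger$ is the conjugate transpose of $\mathbf{w}$. For $\mathbf{a},\mathbf{b}\in\mathbb{C}^m$, $\mathbf{a}\cdot\mathbf{b}=\sum_r\overline{a_r}b_r$. *)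

(* Defs.v *)
From mathcomp Require Import all_boot all_algebra.
From mathcomp Require Import reals.
From mathcomp.real_closed Require Import complex.

Set Implicit Arguments.
Unset Strict Implicit.
Unset Printing Implicit Defensive.

Import GRing.Theory Num.Theory.
Local Open Scope ring_scope.

Section Defs.
Variables (R : realType) (d l m t : nat).
Local Notation C := (R[i]).

Definition iunit : C := Complex 0 1.
Definition RtoC (x : R) : C := Complex x 0.

Definition ctr p q (M : 'M[C]_(p, q)) : 'M[C]_(q, p) := map_mx Num.conj (M^T).

Definition dotc p (a b : 'cV[C]_p) : C := \sum_(r < p) Num.conj (a r 0) * b r 0.

(* Constant coefficients A_{rq} : A0 r q ; higher coefficients
   A^{a_1..a_h}_{rqh} : Ah h r q a  with a : 'I_h -> 'I_d (a j = a_{j+1}). *)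
Variables (A0 : 'M[C]_(m, l))
          (Ah : forall h : nat, 'I_m -> 'I_l -> {ffun 'I_h -> 'I_d} -> C).

Definition Lhat (k : 'rV[R]_d) : 'M[C]_(m, l) :=
  \matrix_(r < m, q < l)
    (A0 r q + \sum_(1 <= h < t.+1) \sum_(a : {ffun 'I_h -> 'I_d})
       iunit ^+ h * @Ah h r q a * \prod_(j < h) RtoC (k 0 (a j))).

Definition Ldag (k : 'rV[R]_d) : 'M[C]_(l, m) := ctr (Lhat k).

Definition inJ (k : 'rV[R]_d) (H : 'cV[C]_m) : Prop := Ldag k *m H = 0.

Variable V : 'M[C]_m.

Definition Gamma (k : 'rV[R]_d) : 'M[C]_m :=
  Lhat k *m invmx (Ldag k *m V *m Lhat k) *m Ldag k.

Definition Delta (k : 'rV[R]_d) : 'M[C]_m := V - V *m Gamma k *m V.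

End Defs.

Definition herm_mx (R : realType) m (V : 'M[R[i]]_m) : Prop := ctr V = V.

Definition posdef_mx (R : realType) m (V : 'M[R[i]]_m) : Prop :=
  forall x : 'cV[R[i]]_m, x != 0 -> 0 < dotc x (V *m x).

(* Main.v *)
Require Import Defs.
From mathcomp Require Import all_boot all_algebra.
From mathcomp Require Import reals.
From mathcomp.real_closed Require Import complex.
From mathcomp Require Import order.
Import Order.TTheory GRing.Theory Num.Theory.
Local Open Scope ring_scope.
Set Implicit Arguments.
Unset Strict Implicit.

Section Helpers.
Variable R : realType.
Local Notation C := (R[i]).

Lemma ctrM p q r (A : 'M[C]_(p, q)) (B : 'M[C]_(q, r)) :
  ctr (A *m B) = ctr B *m ctr A.
Proof. by rewrite /ctr trmx_mul map_mxM. Qed.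

Lemma ctrK p q (A : 'M[C]_(p, q)) : ctr (ctr A) = A.
Proof. by apply/matrixP=> i j; rewrite /ctr !mxE conjCK. Qed.

Lemma ctrD p q (A B : 'M[C]_(p, q)) : ctr (A + B) = ctr A + ctr B.
Proof. by apply/matrixP=> i j; rewrite /ctr !mxE rmorphD. Qed.

Lemma ctrZ p q a (A : 'M[C]_(p, q)) : ctr (a *: A) = a^* *: ctr A.
Proof. by apply/matrixP=> i j; rewrite /ctr !mxE rmorphM. Qed.

Lemma ctr0 p q : ctr (0 : 'M[C]_(p, q)) = 0.
Proof. by apply/matrixP=> i j; rewrite /ctr !mxE rmorph0. Qed.

Lemma ctrV n (A : 'M[C]_n) : ctr (invmx A) = invmx (ctr A).
Proof. by rewrite /ctr trmx_inv map_invmx. Qed.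

Lemma dotcE p (a b : 'cV[C]_p) : dotc a b = (ctr a *m b) 0 0.
Proof. by rewrite /dotc mxE; apply: eq_bigr => i _; rewrite /ctr !mxE. Qed.

Lemma dotc_adj p q (x : 'cV[C]_p) (A : 'M[C]_(p, q)) y :
  dotc x (A *m y) = dotc (ctr A *m x) y.
Proof. by rewrite !dotcE ctrM ctrK mulmxA. Qed.

Lemma dotc_adjl p q (x : 'cV[C]_q) (A : 'M[C]_(p, q)) y :
  dotc (A *m x) y = dotc x (ctr A *m y).
Proof. by rewrite dotc_adj ctrK. Qed.

Lemma dotcC p (x y : 'cV[C]_p) : (dotc x y)^* = dotc y x.
Proof.
rewrite /dotc rmorph_sum; apply: eq_bigr => i _.
by rewrite rmorphM /= conjCK mulrC.
Qed.

Lemma dotcBr p (x y z : 'cV[C]_p) : dotc x (y - z) = dotc x y - dotc x z.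
Proof. by rewrite !dotcE mulmxBr !mxE. Qed.

Lemma dotcZr p (x y : 'cV[C]_p) a : dotc x (a *: y) = a * dotc x y.
Proof. by rewrite !dotcE -scalemxAr mxE. Qed.

Lemma dotcBl p (x y z : 'cV[C]_p) : dotc (x - y) z = dotc x z - dotc y z.
Proof. rewrite /dotc -sumrB; apply: eq_bigr => i _; by rewrite !mxE rmorphB mulrBl. Qed.

Lemma dotcZl p (x y : 'cV[C]_p) a : dotc (a *: x) y = a^* * dotc x y.
Proof. by rewrite !dotcE ctrZ -scalemxAl mxE. Qed.

Lemma dotc0l p (y : 'cV[C]_p) : dotc 0 y = 0.
Proof. by rewrite dotcE ctr0 mul0mx mxE. Qed.

Lemma mul1x p (w : 'cV[C]_p) (c : 'M[C]_1) : w *m c = c 0 0 *: w.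
Proof.
apply/matrixP=> i j; rewrite !mxE big_ord1 (ord1 j) mulrC.
by [].
Qed.

Lemma ctrN p q (A : 'M[C]_(p, q)) : ctr (- A) = - ctr A.
Proof. by apply/matrixP=> i j; rewrite /ctr !mxE rmorphN. Qed.

Lemma dotc0r p (y : 'cV[C]_p) : dotc y 0 = 0.
Proof. by rewrite dotcE mulmx0 mxE. Qed.

Lemma pd_unit n (V : 'M[C]_n) : posdef_mx V -> V \in unitmx.
Proof.
move=> pd; rewrite -unitmx_tr -row_free_unit -kermx_eq0.
apply/eqP/row_matrixP=> i; rewrite row0.
set y := row i _.
have Hy : y *m V^T = 0 by rewrite /y -row_mul mulmx_ker row0.
have Hx : V *m y^T = 0 by rewrite -(trmxK V) -trmx_mul Hy trmx0.
apply: trmx_inj; rewrite trmx0; apply/eqP; apply: contraT => nz.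
by have := pd _ nz; rewrite Hx dotc0r ltxx.
Qed.

End Helpers.
Unset Implicit Arguments.
Set Strict Implicit.
Theorem mainTheorem5 (R : realType) (d l m t : nat)
  (hd : (1 <= d)%N) (hl : (1 <= l)%N) (hm : (1 <= m)%N) (ht : (1 <= t)%N)
  (A0 : 'M[R[i]]_(m, l))
  (Ah : forall h : nat, 'I_m -> 'I_l -> {ffun 'I_h -> 'I_d} -> R[i])
  (V : 'M[R[i]]_m) (w : 'cV[R[i]]_m) (beta : R[i]) (k : 'rV[R]_d) :
  herm_mx V -> posdef_mx V ->
  (forall k' : 'rV[R]_d, k' != 0 ->
     Ldag t A0 Ah k' *m V *m Lhat t A0 Ah k' \in unitmx) ->
  (* beta = sup_{k' <> 0} w . Delta(k') w, finite and positive *)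
  (forall k' : 'rV[R]_d, k' != 0 -> dotc w (Delta t A0 Ah V k' *m w) <= beta) ->
  (forall e : R[i], 0 < e -> exists k' : 'rV[R]_d,
     k' != 0 /\ beta - e < dotc w (Delta t A0 Ah V k' *m w)) ->
  0 < beta ->
  k != 0 ->
  dotc w (Delta t A0 Ah V k *m w) = beta ->
  let T := invmx V - beta^-1 *: (w *m ctr w) in
  let g := fun J : 'cV[R[i]]_m => dotc J (T *m J) in
  (forall H : 'cV[R[i]]_m,
     (inJ t A0 Ah k H /\ g H = 0) <->
     exists b : R[i], H = b *: (Delta t A0 Ah V k *m w)) /\
  (forall b : R[i],
     let H := b *: (Delta t A0 Ah V k *m w) in
     let G := - b *: (invmx (Ldag t A0 Ah k *m V *m Lhat t A0 Ah k)
                        *m Ldag t A0 Ah k *m V *m w) in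
     T *m H = - b *: (Gamma t A0 Ah V k *m V *m w) /\
     T *m H = Lhat t A0 Ah k *m G).
Proof.
move=> hV pdV unitM _ _ bpos k0 hb T g.
have Vu : V \in unitmx := @pd_unit R m V pdV.
set L := Lhat t A0 Ah k.
set Ld := Ldag t A0 Ah k.
have LdE : Ld = ctr L by [].
set M := Ld *m V *m L.
have Mu : M \in unitmx by exact: unitM.
set Mi := invmx M.
set G := Gamma t A0 Ah V k.
have GE : G = L *m Mi *m Ld by [].
set D := Delta t A0 Ah V k.
have DE : D = V - V *m G *m V by [].
set W := invmx V.
have ctrV' : ctr V = V := hV.
have ctrW : ctr W = W by rewrite /W ctrV ctrV'.
have ctrMi : ctr Mi = Mi by rewrite /Mi ctrV /M !ctrM LdE ctrK ctrV' mulmxA.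
have ctrG : ctr G = G by rewrite GE !ctrM ctrMi LdE ctrK mulmxA.
have ctrD' : ctr D = D.
  by rewrite DE ctrD ctrN (@ctrM R _ _ _ (V *m G) V) (@ctrM R _ _ _ V G) ctrG ctrV' mulmxA.
have F2 : Ld *m D = 0.
  by rewrite DE GE mulmxBr !mulmxA (mulmxV Mu) mul1mx subrr.
have DW : D *m W = 1%:M - V *m G.
  by rewrite DE mulmxBl (mulmxV Vu) -(mulmxA (V *m G) V W) (mulmxV Vu) mulmx1.
have WD : W *m D = 1%:M - G *m V.
  by rewrite DE mulmxBr (mulVmx Vu) !mulmxA (mulVmx Vu) mul1mx.
have P : forall J : 'cV[R[i]]_m, Ld *m J = 0 -> D *m (W *m J) = J.
  move=> J HJ; rewrite mulmxA DW mulmxBl mul1mx -mulmxA GE -!mulmxA HJ.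
  by rewrite !mulmx0 subr0.
have bne : beta != 0 by rewrite gt_eqF.
have TD : T *m (D *m w) = - (G *m V *m w).
  rewrite /T mulmxBl mulmxA WD mulmxBl mul1mx -scalemxAl -(mulmxA w) (mul1x w) -dotcE hb.
  by rewrite scalerA mulVf // scale1r addrAC subrr add0r.
have part2 : forall b : R[i],
     let H := b *: (D *m w) in
     let G0 := - b *: (Mi *m Ld *m V *m w) in
     T *m H = - b *: (G *m V *m w) /\ T *m H = L *m G0.
  move=> b H G0; split.
    by rewrite /H -scalemxAr TD scalerN scaleNr.
  by rewrite /H /G0 -scalemxAr TD -scalemxAr GE !mulmxA scalerN scaleNr.
split; last exact: part2.
move=> J; split; last first.
  case=> b ->; split.
    by rewrite /inJ -/Ld -scalemxAr mulmxA F2 mul0mx scaler0.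
  rewrite /g (proj2 (part2 b)) dotc_adj -LdE -scalemxAr mulmxA F2 mul0mx.
  by rewrite scaler0 dotc0l.
case=> LdJ gJ.
set u := D *m w.
have Lu : Ld *m u = 0 by rewrite /u mulmxA F2 mul0mx.
have Hu : dotc u (W *m u) = beta.
  by rewrite /u dotc_adjl ctrD' (P _ Lu) hb.
set p := dotc w J.
have Hp : p = dotc u (W *m J).
  by rewrite /p -{1}(P J LdJ) dotc_adj ctrD'.
have gE : g J = dotc J (W *m J) - beta^-1 * (p * p^*).
  rewrite /g /T mulmxBl -scalemxAl -mulmxA mul1x -dotcE -/p dotcBr !dotcZr.
  by rewrite /p dotcC.
set b := p / beta.
set r := J - b *: u.
have Hur : dotc u (W *m r) = 0.
  rewrite /r mulmxBr -scalemxAr dotcBr dotcZr Hu -Hp /b.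
  by rewrite mulfVK // subrr.
have Hru : dotc r (W *m u) = 0.
  by rewrite dotc_adj ctrW -dotcC Hur rmorph0.
have Hrr : dotc r (W *m r) = 0.
  rewrite {2}/r mulmxBr -scalemxAr dotcBr dotcZr Hru mulr0 subr0.
  rewrite /r dotcBl dotcZl -Hp.
  have breal : beta^* = beta by apply: conj_Creal; apply: gtr0_real.
  rewrite /b fmorph_div /= breal -gJ gE.
  congr (_ - _); rewrite mulrAC mulrC; congr (_ * _); exact: mulrC.
have r0 : r = 0.
  apply/eqP; apply: contraT => nz.
  have yz : W *m r != 0.
    apply: contra nz => /eqP Wr.
    by rewrite -[r]mul1mx -(mulmxV Vu) -mulmxA Wr mulmx0.
  have := pdV _ yz.
  rewrite dotc_adj ctrV' mulmxA (mulmxV Vu) mul1mx Hrr.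
  by rewrite ltxx.
exists b; apply/eqP; rewrite -subr_eq0; apply/eqP; exact: r0.
Qed.
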